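(* Let $G$, $P$, $n$, $\alpha$, $n'$, $\zeta$, $\mathcal C_{\mathrm{pool}}$ and $P(\mathbf c)$ be as in the context, and let $\bar P_{\max}=\max_{\mathbf c\in\mathcal C_{\mathrm{pool}}}P(\mathbf c)$. Then $$\bar P_{\max}\le\frac{2^{-2\alpha n\zeta\sum_{e\in E}\log_2 p(\tau(e)\mid\sigma(e))}}{|\mathcal C_{\mathrm{pool}}|}.$$
   Context: $G=(V,E,L)$ is a deterministic, lossless, primitive labeled directed graph over a finite alphabet $\Sigma$; edge $e$ has initial vertex $\sigma(e)$, terminal vertex $\tau(e)$, label $L(e)$. $P$ is a probability mass function on $E$ with $P(e)>0$ for all $e$, stationary: with $\pi(u)=\sum_{e:\sigma(e)=u}P(e)$, $\pi(u)=\sum_{e:\tau(e)=u}P(e)$. Write $p(\tau(e)\mid\sigma(e))=P(e)/\pi(\sigma(e))$; $P_{\min}=\min_eP(e)$. $n$ is a positive integer with $nP(e)\in\mathbb Z$ for all $e$; $\alpha\in(0,1)$, $n'=\lfloor\alpha n\rfloor$, $0<\zeta<\frac{1-\alpha}{\alpha}P_{\min}$, $v_{\mathrm{root}}\in V$ fixed. $\mathcal W$ is the set of paths $\mathbf w=(e_1,\dots,e_{n'})$ with $\sigma(e_1)=v_{\mathrm{root}}$ and $|S_{\mathbf w}(e)/n'-P(e)|<\zeta$ for all $e$, where $S_{\mathbf w}(e)$ counts occurrences of $e$ in $\mathbf w$. For $\mathbf w\in\mathcal W$ ending at $v_{\mathrm{end}}$, the multigraph with $nP(e)-S_{\mathbf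 w}(e)>0$ copies of each $e$ has an Eulerian path from $v_{\mathrm{end}}$ to $v_{\mathrm{root}}$; $\Phi(\mathbf w)$ is the lexicographically first. $\mathcal C_{\mathrm{pool}}=\{L(\mathbf w\|\Phi(\mathbf w)):\mathbf w\in\mathcal W\}$; each codeword $\mathbf c$ has a unique prefix $\mathbf w$, and $P(\mathbf c)=\prod_{i=1}^{n'}p(\tau(e_i)\mid\sigma(e_i))$, the probability that a length-$n'$ random walk governed by $P$ from $v_{\mathrm{root}}$ (choosing edge $e$ out of $u$ with probability $P(e)/\pi(u)$) equals that prefix. *)

(* Defs.v *)
From HB Require Import structures.
From mathcomp Require Import all_boot all_order all_algebra.
From mathcomp Require Import reals exp.
Set Implicit Arguments. Unset Strict Implicit. Unset Printing Implicit Defensive.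
Import Order.TTheory GRing.Theory Num.Theory.

Section Graph.
Variables (V E : finType) (sig tau : E -> V).

Definition conn (e f : E) : bool := tau e == sig f.
Definition walk (s : seq E) : bool := sorted conn s.
Definition walk_from_to (u v : V) (s : seq E) : bool :=
  match s with
  | [::] => u == v
  | e :: s' => [&& sig e == u, walk s & tau (last e s') == v]
  end.

Definition deterministic (S : eqType) (L : E -> S) : Prop :=
  forall e f, sig e = sig f -> L e = L f -> e = f.
Definition lossless (S : eqType) (L : E -> S) : Prop :=
  forall u v (s t : seq E), walk_from_to u v s -> walk_from_to u v t ->
    map L s = map L t -> s = t.
(* primitive: some positive power of the adjacency matrix is positive, i.e.
   for some k > 0 any two vertices are joined by a path of length k *)
Definition primitive : Prop :=
  exists k, (0 < k)%N /\
    forall u v : V, exists s : seq E, size s = k /\ walk_from_to u v s.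

Definition occ (w : seq E) (e : E) : nat := count_mem e w.
(* initial vertex of the multigraph path: v_end (v_root if w is empty) *)
Definition end_vertex (vroot : V) (w : seq E) : V :=
  match w with [::] => vroot | e :: w' => tau (last e w') end.

Fixpoint lexle (s t : seq nat) : bool :=
  match s, t with
  | [::], _ => true
  | _ :: _, [::] => false
  | x :: s', y :: t' => (x < y)%N || ((x == y) && lexle s' t')
  end.

Section Prob.
Variable R : realType.
Local Open Scope ring_scope.
Variable P : E -> R.

Definition pi_v (u : V) : R := \sum_(e : E | sig e == u) P e.
Definition ptrans (e : E) : R := P e / pi_v (sig e).
Definition Pmin : R :=
  if [pick e : E] is Some e0 then \big[Order.min/P e0]_(e : E) P e else 0.
Definition Ppath (w : seq E) : R := \prod_(e <- w) ptrans e.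

Definition stationary_pmf : Prop :=
  [/\ forall e, 0 < P e, \sum_e P e = 1 &
      forall u : V, pi_v u = \sum_(e : E | tau e == u) P e].
End Prob.

Section Code.
Variables (R : realType) (P : E -> R) (mult : E -> nat) (n : nat)
  (alpha zeta : R) (vroot : V) (rank : E -> nat).
Local Open Scope ring_scope.

Definition nprime : nat := Num.truncn (alpha * n%:R).

Definition Wset : {set nprime.-tuple E} :=
  [set w : nprime.-tuple E |
     [&& walk w, (if tval w is e :: _ then sig e == vroot else true) &
         [forall e : E, `| (occ w e)%:R / nprime%:R - P e | < zeta]]].

(* Eulerian path in the residual multigraph (mult e - S_w(e) copies of e)
   from v_end to v_root *)
Definition eulerian (w s : seq E) : bool :=
  walk_from_to (end_vertex vroot w) vroot s &&
  [forall e : E, occ s e == (mult e - occ w e)%N].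

Definition Phi (w : seq E) : seq E :=
  match [pick t : (n - nprime).-tuple E |
           eulerian w t &&
           [forall t' : (n - nprime).-tuple E,
              eulerian w t' ==> lexle (map rank t) (map rank t')]] with
  | Some t => tval t
  | None => [::]
  end.

Definition codeword (S : eqType) (L : E -> S) (w : seq E) : seq S :=
  map L (w ++ Phi w).

Definition Cpool (S : eqType) (L : E -> S) : seq (seq S) :=
  undup [seq codeword L (tval w) | w in Wset].
Definition card_Cpool (S : eqType) (L : E -> S) : nat := size (Cpool L).
End Code.
End Graph.

(* Main.v *)
Require Import Defs.
From HB Require Import structures.
From mathcomp Require Import all_boot all_order all_algebra.
From mathcomp Require Import reals exp sequences.
From mathcomp Require Import ring lra.
Import Order.TTheory GRing.Theory Num.Theory.
Local Open Scope ring_scope.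

Section Aux.
Variables (R : realType) (V E : finType) (sig tau : E -> V) (P : E -> R).
Hypothesis Ppos : forall e, 0 < P e.

Fixpoint mywalk (u : V) (s : seq E) : bool :=
  if s is e :: s' then (sig e == u) && mywalk (tau e) s' else true.

Fixpoint walks (m : nat) (u : V) : seq (seq E) :=
  if m is m'.+1 then
    [seq e :: s | e <- [seq e <- index_enum E | sig e == u], s <- walks m' (tau e)]
  else [:: [::]].

Lemma pi_ge (e : E) : P e <= pi_v sig P (sig e).
Proof.
rewrite /pi_v (bigD1 e) //= lerDl; apply: sumr_ge0 => i _; exact: ltW.
Qed.

Lemma ptrans_pos e : 0 < ptrans sig P e.
Proof.
rewrite /ptrans divr_gt0 //; exact: lt_le_trans (Ppos e) (pi_ge e).
Qed.

Lemma ptrans_le1 e : ptrans sig P e <= 1.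
Proof.
have h := lt_le_trans (Ppos e) (pi_ge e).
rewrite /ptrans ler_pdivrMr // mul1r; exact: pi_ge.
Qed.

Lemma walks_sum m u : \sum_(s <- walks m u) Ppath sig P s <= 1.
Proof.
elim: m u => [|m IH] u /=.
  by rewrite big_seq1 /Ppath big_nil.
rewrite big_allpairs_dep /=.
apply: (@le_trans _ _ (\sum_(e <- [seq e <- index_enum E | sig e == u]) ptrans sig P e)).
  apply: ler_sum => e _.
  under eq_bigr => s _ do rewrite /Ppath big_cons.
  rewrite -mulr_sumr -[X in _ <= X]mulr1; apply: ler_wpM2l.
    exact: ltW (ptrans_pos e).
  exact: IH.
rewrite big_filter.
have -> : \sum_(e <- index_enum E | sig e == u) ptrans sig P e
        = \sum_(e | sig e == u) P e / pi_v sig P u.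
  by apply: eq_bigr => e /eqP <-.
rewrite -mulr_suml -/(pi_v sig P u).
have [->|nz] := eqVneq (pi_v sig P u) 0; first by rewrite mul0r.
by rewrite mulfV.
Qed.

Lemma walks_mem s u : mywalk u s -> s \in walks (size s) u.
Proof.
elim: s u => [|e s IH] u /=; first by move=> _; rewrite mem_seq1.
move=> /andP[/eqP he hw].
apply: (@allpairs_f_dep _ (fun _ => seq E : eqType)) => //.
  by rewrite mem_filter he eqxx mem_index_enum.
exact: IH.
Qed.

Lemma walks_uniq m u : uniq (walks m u).
Proof.
elim: m u => [|m IH] u //=.
apply: (@allpairs_uniq_dep _ (fun _ => seq E : eqType)).
- exact: filter_uniq (index_enum_uniq E).
- by move=> e _; apply: IH.
- move=> [x y] [x' y'] _ _ /= [ex ey]; subst; done.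
Qed.

Lemma sorted_mywalk u s :
  sorted (conn sig tau) s -> (if s is e :: _ then sig e == u else true) ->
  mywalk u s.
Proof.
elim: s u => [|e s IH] u //= hp he.
rewrite he /=; apply: IH; first exact: path_sorted hp.
case: s hp => //= f s /andP[hc _]; by rewrite eq_sym.
Qed.

Lemma Ppath_exp s :
  Ppath sig P s = expR (\sum_(e : E) (count_mem e s)%:R * ln (ptrans sig P e)).
Proof.
elim: s => [|x s IH].
  by rewrite /Ppath big_nil big1 ?expR0 // => e _; rewrite mul0r.
rewrite /Ppath big_cons -/(Ppath sig P s) IH.
rewrite [in RHS](eq_bigr (fun e => (x == e)%:R * ln (ptrans sig P e) +
   (count_mem e s)%:R * ln (ptrans sig P e))); last first.
  by move=> e _; rewrite /= natrD mulrDl.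
rewrite big_split /= expRD; congr (_ * _).
rewrite (bigD1 x) //= eqxx mul1r big1 ?addr0.
  by rewrite lnK // posrE ptrans_pos.
by move=> e; rewrite eq_sym => /negbTE ->; rewrite mul0r.
Qed.

Lemma sub_sum (T : eqType) (A B : seq T) (F : T -> R) :
  uniq A -> uniq B -> {subset A <= B} -> (forall x, 0 <= F x) ->
  \sum_(x <- A) F x <= \sum_(x <- B) F x.
Proof.
move=> uA uB sAB F0.
have H : \sum_(i <- B | i \in A) F i = \sum_(i <- A) F i.
  rewrite -big_filter; apply: perm_big; apply: uniq_perm => //; first exact: filter_uniq.
  by move=> x; rewrite mem_filter; case: (boolP (x \in A)) => //= /sAB ->.
rewrite -H [X in _ <= X](bigID (fun i => i \in A)) /=.
by rewrite lerDl sumr_ge0.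
Qed.

End Aux.

Theorem claim2 (R : realType) (V E Sigma : finType)
  (sig tau : E -> V) (L : E -> Sigma) (P : E -> R)
  (n : nat) (mult : E -> nat) (alpha zeta : R) (vroot : V)
  (rank : E -> nat) :
  deterministic sig L ->
  lossless sig tau L ->
  primitive sig tau ->
  stationary_pmf sig tau P ->
  (0 < n)%N ->
  (forall e, n%:R * P e = (mult e)%:R) ->
  0 < alpha < 1 ->
  0 < zeta -> zeta < (1 - alpha) / alpha * Pmin P ->
  injective rank ->
  forall c, c \in Cpool sig tau P mult n alpha zeta vroot rank L ->
  forall w, w \in Wset sig tau P n alpha zeta vroot ->
  codeword sig tau mult n alpha vroot rank L (tval w) = c ->
  Ppath sig P (tval w) <=
    powR 2 (- (2 * alpha * n%:R * zeta *
                \sum_(e : E) (ln (ptrans sig P e) / ln 2)))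
    / (card_Cpool sig tau P mult n alpha zeta vroot rank L)%:R.
Proof.
move=> _ _ _ [Ppos _ _] _ _ /andP[a0 a1] z0 _ _ c cin w win wc.
set m := nprime n alpha.
set W := Wset sig tau P n alpha zeta vroot.
set D := 2 * alpha * n%:R * zeta.
set K := expR (- (D * \sum_(e : E) ln (ptrans sig P e))).
have D0 : 0 <= D by rewrite /D !mulr_ge0 // ?ltW.
have ln2 : 0 < ln (2 : R) by apply: ln_gt0; rewrite ltr1n.
have HK : powR 2 (- (2 * alpha * n%:R * zeta *
                \sum_(e : E) (ln (ptrans sig P e) / ln 2))) = K.
  rewrite /powR pnatr_eq0 /= /K -mulr_suml -/D; congr expR.
  by field; rewrite gt_eqF.
have mle : m%:R <= alpha * n%:R.
  by rewrite /m /nprime truncn_le mulr_ge0 // ltW.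
have occ_bound : forall w1 w2 : m.-tuple E, w1 \in W -> w2 \in W -> forall e,
    (occ w2 e)%:R - D <= (occ w1 e)%:R :> R.
  move=> w1 w2; rewrite !inE => /and3P[_ _ /forallP h1] /and3P[_ _ /forallP h2] e.
  have [m0|mpos] := eqVneq m 0%N.
    have o0 : forall t : m.-tuple E, occ t e = 0%N.
      move=> t; apply/eqP; rewrite -leqn0 -m0 -{2}(size_tuple t); exact: count_size.
    by rewrite !o0 sub0r oppr_le0.
  have mp : 0 < m%:R :> R by rewrite ltr0n lt0n.
  move: (h1 e) (h2 e); rewrite !ltr_norml => /andP[l1 u1] /andP[l2 u2].
  set x1 := (occ w1 e)%:R / m%:R in l1 u1.
  set x2 := (occ w2 e)%:R / m%:R in l2 u2.
  have e1 : (occ w1 e)%:R = x1 * m%:R by rewrite /x1 divfK // gt_eqF.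
  have e2 : (occ w2 e)%:R = x2 * m%:R by rewrite /x2 divfK // gt_eqF.
  rewrite e1 e2 /D.
  have hx : x2 - x1 <= 2 * zeta by lra.
  have h3 : (x2 - x1) * m%:R <= 2 * zeta * m%:R by rewrite ler_wpM2r // ltW.
  have h4 : 2 * zeta * m%:R <= 2 * zeta * (alpha * n%:R).
    by rewrite ler_wpM2l // mulr_ge0 // ltW.
  lra.
have Hle : forall w' : m.-tuple E, w' \in W ->
    Ppath sig P (tval w) <= K * Ppath sig P (tval w').
  move=> w' w'in.
  rewrite !Ppath_exp // /K -expRD ler_expR.
  rewrite -mulNr mulr_sumr -big_split ler_sum // => e _.
  have hb := occ_bound w w' win w'in e.
  have lp : ln (ptrans sig P e) <= 0 by apply: ln_le0; apply: ptrans_le1.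
  rewrite /occ in hb.
  set a := (count_mem e (tval w))%:R in hb *.
  set b := (count_mem e (tval w'))%:R in hb *.
  set l := ln (ptrans sig P e) in lp *.
  have hab : 0 <= a - b + D by lra.
  have : 0 <= (a - b + D) * (- l) by rewrite mulr_ge0 // oppr_ge0.
  move=> h; rewrite /=; nra.
have Pge0 : forall s, 0 <= Ppath sig P s by move=> s; rewrite Ppath_exp // expR_ge0.
have Hsum : \sum_(w' in W) Ppath sig P (tval w') <= 1.
  rewrite -big_enum -(big_map val predT (Ppath sig P)).
  apply: le_trans (@walks_sum R V E sig tau P Ppos m vroot).
  apply: sub_sum => //.
  - by rewrite map_inj_uniq ?enum_uniq //; apply: val_inj.
  - exact: walks_uniq.
  - move=> x /mapP[t]; rewrite mem_enum inE => /and3P[hw hh _] ->.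
    by move: (@walks_mem _ _ _ _ _ _ (@sorted_mywalk _ _ _ _ _ _ hw hh)); rewrite size_tuple.
have Hcard : (card_Cpool sig tau P mult n alpha zeta vroot rank L)%:R <= #|W|%:R :> R.
  rewrite ler_nat /card_Cpool /Cpool; apply: leq_trans (size_undup _) _.
  by rewrite size_image.
have cpos : 0 < (card_Cpool sig tau P mult n alpha zeta vroot rank L)%:R :> R.
  rewrite ltr0n /card_Cpool; move: cin.
  by case: (Cpool sig tau P mult n alpha zeta vroot rank L).
rewrite HK ler_pdivlMr //.
apply: le_trans (ler_wpM2l (Pge0 _) Hcard) _.
have -> : Ppath sig P (tval w) * #|W|%:R = \sum_(w' in W) Ppath sig P (tval w).
  by rewrite sumr_const mulr_natr.
apply: le_trans (ler_sum _ (fun w' w'in => Hle w' w'in)) _.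
rewrite -mulr_sumr -[X in _ <= X]mulr1 ler_wpM2l //.
exact: expR_ge0.
Qed.
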